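(* Let $n\ge 3$, let $C=\bigcap_{i=1}^{m}\{x\in\mathbb{R}^n:\langle x,v_i\rangle\ge 0\}$ be a strictly convex good cone with $C\setminus\{0\}\subset\{x_n>0\}$ satisfying the smoothness criterion, and let $M=P^{\lambda}=(T^n\times P)/\Delta$ (the good contact toric manifold associated with $C$) and $N=P^{\tilde\lambda}=(T^{n-1}\times P)/\widetilde{\Delta}$ (the symplectic toric manifold associated with $P$). Then $M$ is a principal $S^1$-bundle over $N$, with projection \[d:M\to N,\qquad [t,p]\mapsto[\tilde t,p],\] where for $t=(e^{i\theta_1},\dots,e^{i\theta_n})\in T^n$, $\tilde t=(e^{i\theta_1},\dots,e^{i\theta_{n-1}})\in T^{n-1}$ is $t$ with the last coordinate dropped.
   Context: A good cone in $\mathbb{R}^n$ is a rational polyhedral cone $C=\bigcap_{i=1}^m\{x:\langle x,v_i\rangle\ge 0\}$ (inequalities minimal), with facets $F_i$ and primitive inward normals $v_i=(v_{i1},\dots,v_{in})\in\mathbb{Z}^n$, such that for $0<l<n$ every codimension-$l$ face is the intersection of exactly $l$ facets and the corresponding normals generate a rank-$l$ direct summand of $\mathbb{Z}^n$; strictly convex means $C$ contains no line. $P=C\cap\{x_n=1\}$, identified with $\{y\in\mathbb{R}^{n-1}:\langle y,\tilde v_i\rangle\ge -v_{in}\}$ where $\tilde v_i=(v_{i1},\dots,v_{i,n-1})$; its facets are $\widetilde{F}_i=F_i\cap P$. Smoothness criterion: $P$ is a Delzant polytope in $\mathbb{R}^{n-1}$ and each $\tilde v_i$ is primitive in $\mathbb{Z}^{n-1}$.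 $\Delta$ is the equivalence relation on $T^n\times P$: $(g,p)\Delta(h,q)$ iff $p=q$ and $g^{-1}h$ lies in the closed subgroup of $T^n=\mathbb{R}^n/\mathbb{Z}^n$ generated by the images of the lines $\mathbb{R}v_i$, $p\in\widetilde{F}_i$; $\widetilde{\Delta}$ is the analogous relation on $T^{n-1}\times P$ using the vectors $\tilde v_i$ in $T^{n-1}=\mathbb{R}^{n-1}/\mathbb{Z}^{n-1}$. Here $P^{\lambda}$ is $T^n$-equivariantly homeomorphic to the good contact toric manifold associated with $C$, and $P^{\tilde\lambda}$ to the symplectic toric manifold with Delzant polytope $P$. The $S^1$ acting is the last circle factor $\{(1,\dots,1,e^{i\theta})\}\subset T^n$, acting on the first factor. *)

(* Defs.v *)
From HB Require Import structures.
From mathcomp Require Import all_boot all_order all_algebra.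
From mathcomp Require Import all_classical all_reals topology subtype_topology.
Set Implicit Arguments. Unset Strict Implicit. Unset Printing Implicit Defensive.
Import Order.TTheory GRing.Theory Num.Theory.
Import numFieldTopology.Exports.
Local Open Scope classical_set_scope.
Local Open Scope ring_scope.

Record cquot (T : Type) (r : T -> T -> Prop) := CQ {
  cq_set : set T ;
  cq_ex : exists x, cq_set = r x }.

HB.instance Definition _ (T : Type) (r : T -> T -> Prop) :=
  gen_eqMixin (cquot r).
HB.instance Definition _ (T : Type) (r : T -> T -> Prop) :=
  gen_choiceMixin (cquot r).

Definition cls (T : Type) (r : T -> T -> Prop) (x : T) : cquot r :=
  @CQ T r (r x) (ex_intro _ x erefl).

Definition crepr (T : Type) (r : T -> T -> Prop) (q : cquot r) : T :=
  projT1 (cid (cq_ex q)).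

Section quot_topology.
Context {T : topologicalType} (r : T -> T -> Prop).

Definition cquot_open (U : set (cquot r)) := open (@cls T r @^-1` U).

Lemma cquot_openT : cquot_open setT.
Proof. by rewrite /cquot_open preimage_setT; exact: openT. Qed.

Lemma cquot_openI : setI_closed cquot_open.
Proof. by move=> A B oA oB; exact: openI. Qed.

Lemma cquot_open_bigU (I : Type) (f : I -> set (cquot r)) :
  (forall i, cquot_open (f i)) -> cquot_open (\bigcup_i f i).
Proof. by move=> ofi; rewrite /cquot_open preimage_bigcup; apply: bigcup_open => i _; exact: ofi. Qed.

HB.instance Definition _ :=
  @isOpenTopological.Build (cquot r) cquot_open cquot_openT cquot_openI cquot_open_bigU.
End quot_topology.

Definition ipR (R : realType) (n : nat) (x y : 'rV[R]_n) : R :=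
  \sum_(j < n) x 0 j * y 0 j.

Definition toR (R : realType) (n : nat) (u : 'rV[int]_n) : 'rV[R]_n :=
  map_mx (fun z : int => z%:~R) u.
Arguments toR R {n} u.

Definition primitive (n : nat) (u : 'rV[int]_n) : Prop :=
  forall (c : int) (w : 'rV[int]_n), u = c *: w -> `|c| = 1.

Definition Zspan (n m : nat) (u : 'I_m -> 'rV[int]_n) (S : {set 'I_m}) :
  set 'rV[int]_n :=
  [set w | exists c : 'I_m -> int, w = \sum_(i in S) c i *: u i].

Definition Zfree (n m : nat) (u : 'I_m -> 'rV[int]_n) (S : {set 'I_m}) : Prop :=
  forall c : 'I_m -> int, \sum_(i in S) c i *: u i = 0 ->
    forall i, i \in S -> c i = 0.

Definition Zsubgroup (n : nat) (K : set 'rV[int]_n) : Prop :=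
  K 0 /\ forall x y, K x -> K y -> K (x - y).

Definition direct_summand (n : nat) (L : set 'rV[int]_n) : Prop :=
  exists K : set 'rV[int]_n, Zsubgroup K /\
    (forall x, L x -> K x -> x = 0) /\
    (forall w, exists a b, L a /\ K b /\ w = a + b).

Definition set_dim (R : realType) (n : nat) (F : set 'rV[R]_n) (d : nat) : Prop :=
  (exists A : 'M[R]_(d, n), (forall i, F (row i A)) /\ \rank A = d) /\
  (forall A : 'M[R]_(d.+1, n), (forall i, F (row i A)) -> (\rank A <= d)%N).

Definition cone (R : realType) (n m : nat) (v : 'I_m -> 'rV[int]_n) : set 'rV[R]_n :=
  [set x | forall i, 0 <= ipR x (toR R (v i))].
Arguments cone R {n m} v.

Definition facet (R : realType) (n m : nat) (v : 'I_m -> 'rV[int]_n) (i : 'I_m) :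
  set 'rV[R]_n :=
  [set x | cone R v x /\ ipR x (toR R (v i)) = 0].
Arguments facet R {n m} v i.

Definition face (R : realType) (n : nat) (C F : set 'rV[R]_n) : Prop :=
  exists w : 'rV[R]_n, (forall x, C x -> 0 <= ipR x w) /\
    F = [set x | C x /\ ipR x w = 0].

Definition minimal_ineqs (R : realType) (n m : nat) (v : 'I_m -> 'rV[int]_n) : Prop :=
  forall i, exists x : 'rV[R]_n,
    (forall j, j != i -> 0 <= ipR x (toR R (v j))) /\ ipR x (toR R (v i)) < 0.
Arguments minimal_ineqs R {n m} v.

Definition facets_containing (R : realType) (n m : nat) (v : 'I_m -> 'rV[int]_n)
  (F : set 'rV[R]_n) : {set 'I_m} :=
  [set i : 'I_m | `[< F `<=` facet R v i >]]%SET.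
Arguments facets_containing R {n m} v F.

Definition good_cone (R : realType) (n m : nat) (v : 'I_m -> 'rV[int]_n) : Prop :=
  (forall i, primitive (v i)) /\ minimal_ineqs R v /\
  forall (F : set 'rV[R]_n) (l : nat), (0 < l < n)%N ->
    face (cone R v) F -> set_dim F (n - l) ->
    let S := facets_containing R v F in
    #|S| = l /\ F = [set x | forall i, i \in S -> facet R v i x] /\
    Zfree v S /\ direct_summand (Zspan v S).
Arguments good_cone R {n m} v.

Definition strictly_convex (R : realType) (n : nat) (C : set 'rV[R]_n) : Prop :=
  forall x, C x -> C (- x) -> x = 0.

(* The polytope P = C ∩ {x_n = 1} in R^(n-1), n = k.+1                  *)
Definition vtil (k : nat) (u : 'rV[int]_k.+1) : 'rV[int]_k :=
  \row_(j < k) u 0 (widen_ord (leqnSn k) j).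

Definition dropR (R : realType) (k : nat) (a : 'rV[R]_k.+1) : 'rV[R]_k :=
  \row_(j < k) a 0 (widen_ord (leqnSn k) j).

Definition polyP (R : realType) (k m : nat) (v : 'I_m -> 'rV[int]_k.+1) :
  set 'rV[R]_k :=
  [set y | forall i, - ((v i 0 ord_max)%:~R) <= ipR y (toR R (vtil (v i)))].
Arguments polyP R {k m} v.

Definition facetP (R : realType) (k m : nat) (v : 'I_m -> 'rV[int]_k.+1) (i : 'I_m) :
  set 'rV[R]_k :=
  [set y | polyP R v y /\ ipR y (toR R (vtil (v i))) = - ((v i 0 ord_max)%:~R)].
Arguments facetP R {k m} v i.

Definition vertex (R : realType) (k : nat) (P : set 'rV[R]_k) (p : 'rV[R]_k) : Prop :=
  P p /\ forall (a b : 'rV[R]_k) (t : R), P a -> P b -> 0 < t < 1 ->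
    p = t *: a + (1 - t) *: b -> a = b.

Definition delzant (R : realType) (k m : nat) (v : 'I_m -> 'rV[int]_k.+1) : Prop :=
  let P := polyP R v in
  (exists B : R, forall y, P y -> forall j, `|y 0 j| <= B) /\
  (exists y : 'rV[R]_k, nbhs y P) /\
  forall p, vertex P p ->
    let S := [set i : 'I_m | `[< facetP R v i p >]]%SET in
    #|S| = k /\ Zfree (fun i => vtil (v i)) S /\
    Zspan (fun i => vtil (v i)) S = setT.
Arguments delzant R {k m} v.

Definition smoothness_criterion (R : realType) (k m : nat) (v : 'I_m -> 'rV[int]_k.+1)
  : Prop :=
  delzant R v /\ forall i, primitive (vtil (v i)).
Arguments smoothness_criterion R {k m} v.

Definition Zrel (R : realType) (n : nat) (a b : 'rV[R]_n) : Prop :=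
  exists z : 'rV[int]_n, b - a = toR R z.
Notation torus R n := (cquot (@Zrel R n)).

Definition Zrel1 (R : realType) (a b : R) : Prop := exists z : int, b - a = z%:~R.
Notation circle R := (cquot (@Zrel1 R)).
Definition cadd (R : realType) (s t : circle R) : circle R :=
  cls (@Zrel1 R) (crepr s + crepr t).
Definition czero (R : realType) : circle R := cls (@Zrel1 R) 0.

Definition Rsubgroup (R : realType) (n : nat) (A : set 'rV[R]_n) : Prop :=
  A 0 /\ forall x y, A x -> A y -> A (x - y).

(* preimage in R^n of the closed subgroup of T^n generated by the images of
   the lines R w_i (i in I): the smallest closed subgroup of R^n containing
   Z^n and these lines *)
Definition gen_closed_subgroup (R : realType) (n m : nat) (w : 'I_m -> 'rV[int]_n)
  (I : set 'I_m) : set 'rV[R]_n :=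
  \bigcap_(A in [set A : set 'rV[R]_n | closed A /\ Rsubgroup A /\
      (forall z, A (toR R z)) /\
      (forall i (t : R), I i -> A (t *: toR R (w i)))]) A.
Arguments gen_closed_subgroup R {n m} w I.

Definition PT (R : realType) (k m : nat) (v : 'I_m -> 'rV[int]_k.+1) :=
  set_type (polyP R v).
Arguments PT R {k m} v.

Definition Delta (R : realType) (k m : nat) (v : 'I_m -> 'rV[int]_k.+1)
  (gp hq : (torus R k.+1 * PT R v)%type) : Prop :=
  gp.2 = hq.2 /\
  gen_closed_subgroup R v [set i | facetP R v i (set_val gp.2)]
    (crepr hq.1 - crepr gp.1).
Arguments Delta R {k m} v gp hq.

Definition Deltatil (R : realType) (k m : nat) (v : 'I_m -> 'rV[int]_k.+1)
  (gp hq : (torus R k * PT R v)%type) : Prop :=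
  gp.2 = hq.2 /\
  gen_closed_subgroup R (fun i => vtil (v i)) [set i | facetP R v i (set_val gp.2)]
    (crepr hq.1 - crepr gp.1).
Arguments Deltatil R {k m} v gp hq.

Notation Mspace R v := (cquot (Delta R v)).
Notation Nspace R v := (cquot (Deltatil R v)).

Definition dproj (R : realType) (k m : nat) (v : 'I_m -> 'rV[int]_k.+1)
  (x : Mspace R v) : Nspace R v :=
  let tp := crepr x in
  cls (Deltatil R v) (cls (@Zrel R k) (dropR (crepr tp.1)), tp.2).

Definition elast (R : realType) (k : nat) : 'rV[R]_k.+1 :=
  \row_(j < k.+1) (j == ord_max)%:R.
Arguments elast R k.

Definition circle_act (R : realType) (k m : nat) (v : 'I_m -> 'rV[int]_k.+1)
  (s : circle R) (x : Mspace R v) : Mspace R v :=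
  let tp := crepr x in
  cls (Delta R v) (cls (@Zrel R k.+1) (crepr tp.1 + crepr s *: elast R k), tp.2).

Definition principal_bundle (G E B : topologicalType)
  (gadd : G -> G -> G) (g0 : G) (act : G -> E -> E) (p : E -> B) : Prop :=
  continuous (fun gx : G * E => act gx.1 gx.2) /\
  (forall x, act g0 x = x) /\
  (forall g h x, act (gadd g h) x = act g (act h x)) /\
  continuous p /\ (forall b, exists x, p x = b) /\
  (forall g x, p (act g x) = p x) /\
  forall b : B, exists U : set B, open U /\ U b /\
    exists (phi : E -> B * G) (psi : B * G -> E),
      {within p @^-1` U, continuous phi} /\
      {within U `*` setT, continuous psi} /\
      (forall x, U (p x) ->
         (phi x).1 = p x /\ psi (phi x) = x /\
         forall g, phi (act g x) = ((phi x).1, gadd g (phi x).2)) /\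
      (forall z, U z.1 -> p (psi z) = z.1 /\ phi (psi z) = z).

(* Main.v *)
Require Import Defs.
From HB Require Import structures.
From mathcomp Require Import all_boot all_order all_algebra.
From mathcomp Require Import all_classical all_reals topology subtype_topology.
From mathcomp Require Import normedtype derive.
From mathcomp Require Import ring lra zify unstable.
From Stdlib Require Import Lia.
Import Order.TTheory GRing.Theory Num.Theory.
Import numFieldTopology.Exports numFieldNormedType.Exports.
Local Open Scope classical_set_scope.
Local Open Scope ring_scope.
Set Implicit Arguments. Unset Strict Implicit. Unset Printing Implicit Defensive.

Lemma cls_crepr (T : Type) (r : T -> T -> Prop) (q : cquot r) : cls r (crepr q) = q.
Proof.
rewrite /crepr; case: (cid (cq_ex q)) => x /= hx.
case: q hx => s e /= hx; subst s; congr CQ; exact: Prop_irrelevance.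
Qed.

Lemma crepr_cls (T : Type) (r : T -> T -> Prop) (rr : forall x, r x x) (x : T) :
  r x (crepr (cls r x)).
Proof.
rewrite /crepr; case: (cid (cq_ex (cls r x))) => y /= hy; by rewrite hy.
Qed.

Lemma cls_eq (T : Type) (r : T -> T -> Prop) (rs : forall x y, r x y -> r y x)
  (rt : forall x y z, r x y -> r y z -> r x z) (x y : T) :
  r x y -> cls r x = cls r y.
Proof.
move=> rxy; rewrite /cls; have e : r x = r y.
  apply/funext => z; apply/propext; split => h; [exact: rt (rs _ _ rxy) h|exact: rt rxy h].
move: (ex_intro _ x _) (ex_intro _ y _); rewrite e => e1 e2; congr CQ; exact: Prop_irrelevance.
Qed.

Lemma cls_inj (T : Type) (r : T -> T -> Prop) (rr : forall x, r x x) (x y : T) :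
  cls r x = cls r y -> r x y.
Proof. by move=> /(congr1 (@cq_set _ _)) /= ->. Qed.

Lemma cquot_openE (T : topologicalType) (r : T -> T -> Prop) (U : set (cquot r)) :
  open U = open (cls r @^-1` U).
Proof. by []. Qed.

Lemma cls_continuous (T : topologicalType) (r : T -> T -> Prop) : continuous (cls r).
Proof. by apply/continuousP => A oA; rewrite -cquot_openE. Qed.

Lemma cls_surj (T : Type) (r : T -> T -> Prop) (q : cquot r) : exists x, cls r x = q.
Proof. by exists (crepr q); exact: cls_crepr. Qed.

Lemma nbhs_prodP (X Y : topologicalType) (a : X) (b : Y) (W : set (X * Y)) :
  nbhs (a, b) W <-> exists A B, nbhs a A /\ nbhs b B /\ A `*` B `<=` W.
Proof.
split.
  by case=> [[A B]] /= [Aa Bb] ABW; exists A, B.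
by case=> A [B [Aa [Bb ABW]]]; exists (A, B).
Qed.

Definition open_map (X Y : topologicalType) (f : X -> Y) :=
  forall O, open O -> open (f @` O).

Lemma open_map_id (X : topologicalType) : open_map (@id X).
Proof. by move=> O oO; rewrite image_id. Qed.

Lemma open_mapX (X X' Y Y' : topologicalType) (f : X -> X') (g : Y -> Y') :
  open_map f -> open_map g -> open_map (fun z : X * Y => (f z.1, g z.2)).
Proof.
move=> hf hg O oO; rewrite openE => _ [[a b] Oab <-].
have := oO; rewrite openE => /(_ _ Oab) /nbhs_prodP [A [B [Aa [Bb ABO]]]].
apply/nbhs_prodP; exists (f @` A°), (g @` B°); split.
  apply: open_nbhs_nbhs; split; first by apply: hf; exact: open_interior.
  by exists a => //; exact: nbhs_singleton (nbhs_interior Aa).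
split.
  apply: open_nbhs_nbhs; split; first by apply: hg; exact: open_interior.
  by exists b => //; exact: nbhs_singleton (nbhs_interior Bb).
move=> [x y] /= [[a' Aa' <-] [b' Bb' <-]]; exists (a', b') => //.
by apply: ABO; split; apply: interior_subset.
Qed.

Lemma open_surj_open (X Y : topologicalType) (h : X -> Y) (W : set Y) :
  open_map h -> (forall y, exists x, h x = y) -> open (h @^-1` W) -> open W.
Proof.
move=> oh sh oW; suff -> : W = h @` (h @^-1` W) by exact: oh.
apply/seteqP; split => [y Wy|y [x Wx <-] //].
by have [x hx] := sh y; exists x => //; rewrite /preimage /= hx.
Qed.

(* Whitehead: (id x q) is a quotient map when q is, R being locally compact *)
Lemma whitehead (R : realType) (Y B : topologicalType) (q : Y -> B) (W : set (R * B)) :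
  (forall U, open (q @^-1` U) -> open U) -> (forall b, exists y, q y = b) ->
  open ((fun z : R * Y => (z.1, q z.2)) @^-1` W) -> open W.
Proof.
move=> qq qs oO; rewrite openE => -[s0 b0] Wsb.
have [y0 qy0] := qs b0.
set O := (fun z : R * Y => (z.1, q z.2)) @^-1` W in oO.
have Osy : O (s0, y0) by rewrite /O /preimage /= qy0.
have := oO; rewrite openE => /(_ _ Osy) /nbhs_prodP [A [V [As0 [Vy0 AVO]]]].
have [e /= e0 eA] := (nbhs_ballP _ _).1 As0.
pose K := `[s0 - e / 2, s0 + e / 2]%classic.
pose Ab := [set b | forall s, K s -> W (s, b)].
have oAb : open Ab.
  apply: qq; rewrite openE => y1 Ky1.
  have cK : compact K by exact: segment_compact.
  have hcov : forall s, K s -> \forall x' \near s & y \near nbhs y1, O (x', y).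
    move=> s Ks; have : open_nbhs (s, y1) O by split => //; exact: Ky1 s Ks.
    by move/open_nbhs_nbhs.
  have := (compact_near_coveringP K).1 cK Y (nbhs y1) (fun y s => O (s, y)) _ hcov.
  move=> h; rewrite /interior; apply: filterS (h _) => y Ky s Ks; exact: Ky s Ks.
have Ab0 : Ab b0.
  move=> s Ks; rewrite -qy0; suff : O (s, y0) by [].
  apply: AVO; split => /=; last exact: nbhs_singleton.
  apply: eA; rewrite /ball /=; move: Ks; rewrite /K /= in_itv /= => /andP[h1 h2].
  by rewrite ltr_norml; apply/andP; split; lra.
apply/nbhs_prodP; exists (ball s0 (e / 2)), Ab; split.
  by apply: nbhsx_ballx; rewrite divr_gt0.
split; first by apply: open_nbhs_nbhs; split.
move=> [s b] /= [sb Abb]; apply: Abb; rewrite /K /= in_itv /=.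
move: sb; rewrite /ball /= ltr_norml => /andP[h1 h2].
by apply/andP; split; lra.
Qed.

Section gquot.
Variables (R : realType) (V : normedModType R) (S : set V).
Hypothesis S0 : S 0.
Hypothesis SB : forall a b, S a -> S b -> S (a - b).

Definition grel (a b : V) : Prop := S (b - a).

Lemma SN a : S a -> S (- a).
Proof. by move=> Sa; rewrite -sub0r; apply: SB. Qed.
Lemma SD a b : S a -> S b -> S (a + b).
Proof. by move=> Sa Sb; rewrite -[b]opprK; apply: SB => //; apply: SN. Qed.

Lemma grel_refl x : grel x x. Proof. by rewrite /grel subrr. Qed.
Lemma grel_sym x y : grel x y -> grel y x.
Proof. by rewrite /grel => /SN; rewrite opprB. Qed.
Lemma grel_trans x y z : grel x y -> grel y z -> grel x z.
Proof. by rewrite /grel => h1 h2; have := SD h2 h1; rewrite addrA subrK. Qed.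

Lemma cls_grel_open : open_map (cls grel).
Proof.
move=> O oO; rewrite cquot_openE.
have -> : cls grel @^-1` (cls grel @` O) = \bigcup_(w in S) ((fun x => x - w) @^-1` O).
  apply/seteqP; split => x /=.
    case=> y Oy /(cls_inj grel_refl) => hxy; exists (x - y).
      by [].
    by rewrite /= opprB addrC subrK.
  case=> w Sw Oxw; exists (x - w) => //; apply: cls_eq.
  - exact: grel_sym.
  - exact: grel_trans.
  by rewrite /grel opprB addrC subrK.
apply: bigcup_open => w _; move: oO; apply: (continuousP _).1.
by move=> x; apply: continuousB => //; exact: cst_continuous.
Qed.

End gquot.

Lemma toR0 (R : realType) n : toR R (0 : 'rV[int]_n) = 0.
Proof. by apply/matrixP => i j; rewrite !mxE. Qed.
Lemma toRB (R : realType) n (a b : 'rV[int]_n) : toR R (a - b) = toR R a - toR R b.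
Proof. by apply/matrixP => i j; rewrite !mxE intrB. Qed.
Lemma toRD (R : realType) n (a b : 'rV[int]_n) : toR R (a + b) = toR R a + toR R b.
Proof. by apply/matrixP => i j; rewrite !mxE intrD. Qed.
Lemma toRZ (R : realType) n (c : int) (a : 'rV[int]_n) : toR R (c *: a) = c%:~R *: toR R a.
Proof. by apply/matrixP => i j; rewrite !mxE intrM. Qed.

Definition Zset (R : realType) n : set 'rV[R]_n := fun w => exists z : 'rV[int]_n, w = toR R z.
Definition Zset1 (R : realType) : set R := fun w => exists z : int, w = z%:~R.
Arguments Zset : clear implicits.
Arguments Zset1 : clear implicits.

Lemma Zset0 (R : realType) n : Zset R n 0. Proof. by exists 0; rewrite toR0. Qed.
Lemma ZsetB (R : realType) n a b : Zset R n a -> Zset R n b -> Zset R n (a - b).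
Proof. by move=> [z ->] [w ->]; exists (z - w); rewrite toRB. Qed.
Lemma Zset10 (R : realType) : Zset1 R 0. Proof. by exists 0. Qed.
Lemma Zset1B (R : realType) a b : Zset1 R a -> Zset1 R b -> Zset1 R (a - b).
Proof. by move=> [z ->] [w ->]; exists (z - w); rewrite intrB. Qed.

Lemma torus_open (R : realType) n : open_map (cls (@Zrel R n)).
Proof. exact: (@cls_grel_open R _ (Zset R n) (Zset0 _ _) (@ZsetB _ _)). Qed.
Lemma circle_open (R : realType) : open_map (cls (@Zrel1 R)).
Proof. exact: (@cls_grel_open R R^o (Zset1 R) (Zset10 _) (@Zset1B _)). Qed.

Definition quot_map (X Y : topologicalType) (h : X -> Y) :=
  forall W, open (h @^-1` W) -> open W.

Lemma quot_comp (X Y Z : topologicalType) (h1 : X -> Y) (h2 : Y -> Z) :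
  quot_map h1 -> quot_map h2 -> quot_map (h2 \o h1).
Proof. by move=> q1 q2 W oW; apply: q2; apply: q1. Qed.

Lemma quot_open_surj (X Y : topologicalType) (h : X -> Y) :
  open_map h -> (forall y, exists x, h x = y) -> quot_map h.
Proof. by move=> oh sh W; apply: open_surj_open. Qed.

Lemma quot_cls (T : topologicalType) (r : T -> T -> Prop) : quot_map (cls r).
Proof. by move=> W; rewrite cquot_openE. Qed.

Lemma quot_whitehead (R : realType) (Y B : topologicalType) (q : Y -> B) :
  quot_map q -> (forall b, exists y, q y = b) ->
  quot_map (fun z : R * Y => (z.1, q z.2)).
Proof. by move=> qq qs W; apply: whitehead. Qed.

Lemma quot_whitehead_r (R : realType) (Y B : topologicalType) (q : Y -> B) :
  quot_map q -> (forall b, exists y, q y = b) ->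
  quot_map (fun z : Y * R => (q z.1, z.2)).
Proof.
move=> qq qs W oW.
have -> : W = (@swap B R) @^-1` ((@swap R B) @^-1` W) by apply/seteqP; split => -[].
apply: (continuousP _).1; first exact: swap_continuous.
apply: (quot_whitehead qq qs).
have -> : (fun z : R * Y => (z.1, q z.2)) @^-1` ((@swap R B) @^-1` W) =
   (@swap R Y) @^-1` ((fun z : Y * R => (q z.1, z.2)) @^-1` W).
  by apply/seteqP; split => -[].
by apply: (continuousP _).1; first exact: swap_continuous.
Qed.

Lemma quot_cont_in (X Y Z : topologicalType) (h : X -> Y) (f : Y -> Z) (A : set Y)
  (g : X -> Z) :
  quot_map h -> continuous h -> open A -> continuous g ->
  (forall x, A (h x) -> f (h x) = g x) ->
  {within A, continuous f}.
Proof.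
move=> qh ch oA cg fg; rewrite continuous_open_subspace //.
apply/continuous_inP => // Xs oX; apply: qh.
have -> : h @^-1` (A `&` f @^-1` Xs) = h @^-1` A `&` g @^-1` Xs.
  apply/seteqP; split => x [Ax hx]; split => //.
    by rewrite /preimage /= -fg.
  by rewrite /preimage /= fg.
by apply: openI; [exact: (continuousP _).1 ch _ oA|exact: (continuousP _).1 cg _ oX].
Qed.

Lemma quot_cont (X Y Z : topologicalType) (h : X -> Y) (f : Y -> Z) (g : X -> Z) :
  quot_map h -> continuous g -> (forall x, f (h x) = g x) -> continuous f.
Proof.
move=> qh cg fg; apply/continuousP => Xs oX; apply: qh.
have -> : h @^-1` (f @^-1` Xs) = g @^-1` Xs.
  by apply/seteqP; split => x; rewrite /preimage /= fg.
exact: (continuousP _).1 cg _ oX.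
Qed.

Lemma pair_continuous (X Y Z : topologicalType) (f : X -> Y) (g : X -> Z) :
  continuous f -> continuous g -> continuous (fun x => (f x, g x)).
Proof. by move=> cf cg x; apply: cvg_pair; [exact: cf|exact: cg]. Qed.

Lemma fst_continuous (X Y : topologicalType) : continuous (@fst X Y).
Proof. by move=> [x y]; exact: cvg_fst. Qed.
Lemma snd_continuous (X Y : topologicalType) : continuous (@snd X Y).
Proof. by move=> [x y]; exact: cvg_snd. Qed.

Lemma sum_cont (R : realType) (T : topologicalType) (I : finType) (f : I -> T -> R) :
  (forall i, continuous (f i)) -> continuous (fun x => \sum_i f i x).
Proof.
move=> cf; have : forall s : seq I, continuous (fun x => \sum_(i <- s) f i x).
  elim=> [|i s IH].
    under eq_fun do rewrite big_nil; exact: cst_continuous.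
  under eq_fun do rewrite big_cons.
  by move=> x; apply: continuousD; [exact: cf|exact: IH].
by apply.
Qed.

Lemma mx_cont (R : realType) (T : topologicalType) a b (f : T -> 'M[R]_(a, b)) :
  (forall i j, continuous (fun x => f x i j)) -> continuous f.
Proof.
move=> cf x A [P /= Pn PA]; apply: (filterS PA).
have : forall i, \forall y \near x, forall j, P i j (f y i j).
  move=> i; apply: filter_forall => j; exact: cf i j x _ (Pn i j).
by move/filter_forall.
Qed.

Lemma coord_cont (R : realType) a b i j : continuous (fun M : 'M[R]_(a, b) => M i j).
Proof. exact: coord_continuous. Qed.

Lemma closed_Zset1 (R : realType) : closed (Zset1 R).
Proof.
rewrite -openC openE => x nZx.
have fx := floor_itv x; set f := Num.floor x in fx.
have flt : f%:~R < x.
  rewrite lt_neqAle floor_le andbT; apply/eqP => e; apply: nZx; by exists f.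
move: fx => /andP[_ xf1].
apply/nbhs_ballP; exists (Num.min (x - f%:~R) ((f + 1)%:~R - x)).
  by rewrite /= lt_min !subr_gt0 flt xf1.
move=> y; rewrite /ball /= lt_min => /andP[h1 h2] [z yz]; subst y.
move: h1 h2; rewrite !ltr_norml => /andP[a1 a2] /andP[b1 b2].
have c1 : f%:~R < z%:~R :> R by lra.
have c2 : z%:~R < (f + 1)%:~R :> R by lra.
rewrite ltr_int in c1; rewrite ltr_int in c2; lia.
Qed.

Section gcs.
Variables (R : realType) (n m : nat) (w : 'I_m -> 'rV[int]_n) (I : set 'I_m).

Let G := gen_closed_subgroup R w I.

Lemma G_sub (H : set 'rV[R]_n) : closed H -> Rsubgroup H -> (forall z, H (toR R z)) ->
  (forall i (t : R), I i -> H (t *: toR R (w i))) -> G `<=` H.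
Proof. by move=> cH sH zH lH x Gx; apply: Gx; split. Qed.

Lemma G_Z z : G (toR R z). Proof. by move=> A [_ [_ [zA _]]]. Qed.
Lemma G_line i t : I i -> G (t *: toR R (w i)).
Proof. by move=> Ii A [_ [_ [_ lA]]]; apply: lA. Qed.
Lemma G_B a b : G a -> G b -> G (a - b).
Proof. by move=> Ga Gb A hA; case: (hA) => _ [[_ sA] _]; apply: sA; [apply: Ga|apply: Gb]. Qed.
Lemma G_0 : G 0. Proof. by move=> A [_ [[A0 _] _]]. Qed.
Lemma G_N a : G a -> G (- a). Proof. by move=> Ga; rewrite -sub0r; apply: G_B => //; exact: G_0. Qed.
Lemma G_D a b : G a -> G b -> G (a + b).
Proof. by move=> Ga Gb; rewrite -[b]opprK; apply: G_B => //; apply: G_N. Qed.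
Lemma G_closed : closed G.
Proof. by apply: closed_bigI => A [cA _]. Qed.
End gcs.

Lemma ipRD (R : realType) n (a b w : 'rV[R]_n) : ipR (a + b) w = ipR a w + ipR b w.
Proof. by rewrite /ipR -big_split /=; apply: eq_bigr => j _; rewrite mxE mulrDl. Qed.
Lemma ipRZ (R : realType) n (t : R) (a w : 'rV[R]_n) : ipR (t *: a) w = t * ipR a w.
Proof. by rewrite /ipR mulr_sumr; apply: eq_bigr => j _; rewrite mxE mulrA. Qed.
Lemma ipRN (R : realType) n (a w : 'rV[R]_n) : ipR (- a) w = - ipR a w.
Proof. by rewrite -scaleN1r ipRZ mulN1r. Qed.
Lemma ipRB (R : realType) n (a b w : 'rV[R]_n) : ipR (a - b) w = ipR a w - ipR b w.
Proof. by rewrite ipRD ipRN. Qed.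
Lemma ipR_cont (R : realType) n (w : 'rV[R]_n) : continuous (fun a : 'rV[R]_n => ipR a w).
Proof.
apply: sum_cont => j x; apply: continuousM; first exact: coord_cont.
exact: cst_continuous.
Qed.
Lemma ipR_self_cont (R : realType) n : continuous (fun a : 'rV[R]_n => ipR a a).
Proof.
apply: sum_cont => j x; apply: continuousM; exact: coord_cont.
Qed.

Lemma closed_polyP (R : realType) k m (v : 'I_m -> 'rV[int]_k.+1) : closed (Defs.polyP R v).
Proof.
have -> : Defs.polyP R v = \bigcap_(i in setT)
   ((fun y => ipR y (toR R (vtil (v i)))) @^-1` [set x | - ((v i 0 ord_max)%:~R) <= x]).
  by apply/seteqP; split => y hy i; [move=> _; exact: hy|exact: hy].
apply: closed_bigI => i _; apply: closed_comp; last exact: closed_ge.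
by move=> y _; apply: ipR_cont.
Qed.

Lemma sq_identity (R : realType) n (t : R) (a b : 'rV[R]_n) :
  let q := t *: a + (1 - t) *: b in
  t * ipR a a + (1 - t) * ipR b b - ipR q q = t * (1 - t) * ipR (a - b) (a - b).
Proof.
rewrite /ipR !mulr_sumr -big_split -sumrB /=; apply: eq_bigr => j _; rewrite !mxE; ring.
Qed.

Lemma ipR_sq_eq0 (R : realType) n (a : 'rV[R]_n) : ipR a a <= 0 -> a = 0.
Proof.
move=> h; have h0 : ipR a a = 0.
  apply/eqP; rewrite eq_le h /ipR sumr_ge0 // => j _; exact: sqr_ge0.
apply/matrixP => i j; rewrite ord1 mxE.
have /eqP := h0; rewrite /ipR psumr_eq0; last by move=> l _; exact: sqr_ge0.
move=> /allP /(_ j (mem_index_enum _)) /implyP /(_ isT).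
by rewrite mulf_eq0 orbb => /eqP.
Qed.

Lemma exists_vertex (R : realType) k m (v : 'I_m -> 'rV[int]_k.+1) (B : R) :
  (forall y, Defs.polyP R v y -> forall j, `|y 0 j| <= B) ->
  forall p, Defs.polyP R v p ->
  exists q, vertex (Defs.polyP R v) q /\ forall i, facetP R v i p -> facetP R v i q.
Proof.
move=> hB p Pp.
pose c i : R := - ((v i 0 ord_max)%:~R).
pose F := [set y | Defs.polyP R v y /\
   forall i, facetP R v i p -> ipR y (toR R (vtil (v i))) <= c i].
have cF : closed F.
  have -> : F = Defs.polyP R v `&` \bigcap_(i in [set i | facetP R v i p])
     ((fun y => ipR y (toR R (vtil (v i)))) @^-1` [set x | x <= c i]).
    by apply/seteqP; split => y [h1 h2]; split => //.
  apply: closedI; first exact: closed_polyP.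
  apply: closed_bigI => i _; apply: closed_comp; last exact: closed_le.
  by move=> y _; apply: ipR_cont.
have compF : compact F.
  apply: (subclosed_compact cF).
    by apply: (@rV_compact R k (fun _ : 'I_k => `[- B, B]%classic)) => _; exact: segment_compact.
  move=> y [Py _] j /=; rewrite in_itv /=; rewrite -ler_norml; exact: hB.
have F0 : F !=set0.
  by exists p; split => // i [_ ->]; rewrite /c lexx.
have cf : {within F, continuous (fun a : 'rV[R]_k => ipR a a)}.
  by apply: continuous_subspaceT; exact: ipR_self_cont.
have [q qF qmax] := EVT_max_rV F0 compF cf.
move: qF; rewrite inE => -[Pq qfac].
have tight i : facetP R v i p -> ipR q (toR R (vtil (v i))) = c i.
  move=> hi; apply/eqP; rewrite eq_le qfac //=; exact: Pq.
exists q; split; last first.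
  by move=> i hi; split => //; apply: tight.
split => // a b t Pa Pb /andP[t0 t1] qe.
have aF : F a /\ F b.
  have key i : facetP R v i p -> ipR a (toR R (vtil (v i))) <= c i /\
                                 ipR b (toR R (vtil (v i))) <= c i.
    move=> hi; have := tight i hi; rewrite qe ipRD !ipRZ.
    have := Pa i; have := Pb i; rewrite -/(c i) => h1 h2 h3; split; nra.
  by split; split => // i hi; have [] := key i hi.
have fa := qmax a (mem_set aF.1); have fb := qmax b (mem_set aF.2).
have := sq_identity t a b; rewrite -qe => e.
apply/eqP; rewrite -subr_eq0; apply/eqP; apply: ipR_sq_eq0.
have h : t * (1 - t) * ipR (a - b) (a - b) <= 0.
  rewrite -e; move: fa fb => /= fa fb.
  have h1 : t * ipR a a <= t * ipR q q by rewrite ler_wpM2l // ltW.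
  have h2 : (1 - t) * ipR b b <= (1 - t) * ipR q q by rewrite ler_wpM2l // subr_ge0 ltW.
  lra.
have tt : 0 < t * (1 - t) by rewrite mulr_gt0 // subr_gt0.
by rewrite -(pmulr_rle0 _ tt).
Qed.

Lemma dropRD (R : realType) k (a b : 'rV[R]_k.+1) : dropR (a + b) = dropR a + dropR b.
Proof. by apply/matrixP => i j; rewrite !mxE. Qed.
Lemma dropRZ (R : realType) k (s : R) (a : 'rV[R]_k.+1) : dropR (s *: a) = s *: dropR a.
Proof. by apply/matrixP => i j; rewrite !mxE. Qed.
Lemma dropRN (R : realType) k (a : 'rV[R]_k.+1) : dropR (- a) = - dropR a.
Proof. by apply/matrixP => i j; rewrite !mxE. Qed.
Lemma dropRB (R : realType) k (a b : 'rV[R]_k.+1) : dropR (a - b) = dropR a - dropR b.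
Proof. by rewrite dropRD dropRN. Qed.
Lemma dropR0 (R : realType) k : dropR (0 : 'rV[R]_k.+1) = 0.
Proof. by apply/matrixP => i j; rewrite !mxE. Qed.
Lemma dropR_toR (R : realType) k (z : 'rV[int]_k.+1) : dropR (toR R z) = toR R (vtil z).
Proof. by apply/matrixP => i j; rewrite !mxE. Qed.
Lemma dropR_elast (R : realType) k : dropR (elast R k) = 0.
Proof.
apply/matrixP => i j; rewrite !mxE; case: eqP => // /(congr1 val) /= e.
by have := ltn_ord j; rewrite e ltnn.
Qed.
Lemma dropR_cont (R : realType) k : continuous (@dropR R k).
Proof. by apply: mx_cont => i j; rewrite /dropR; under eq_fun do rewrite mxE; exact: coord_cont. Qed.

Lemma elast_toR (R : realType) k :
  elast R k = toR R (\row_(j < k.+1) ((j == ord_max) : nat)%:Z).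
Proof. by apply/matrixP => i j; rewrite !mxE; case: eqP. Qed.

Lemma drop_G (R : realType) k m (v : 'I_m -> 'rV[int]_k.+1) (J : set 'I_m) t :
  gen_closed_subgroup R v J t ->
  gen_closed_subgroup R (fun i => vtil (v i)) J (dropR t).
Proof.
move=> Gt.
apply: (@G_sub R _ _ v J (fun x => gen_closed_subgroup R (fun i => vtil (v i)) J (dropR x))) Gt => [|||i s Ji].
- apply: closed_comp; last exact: G_closed.
  by move=> x _; exact: dropR_cont.
- split; first by rewrite /= dropR0; exact: G_0.
  by move=> x y /= Gx Gy; rewrite dropRB; exact: G_B.
- by move=> z /=; rewrite dropR_toR; exact: G_Z.
- by rewrite /= dropRZ dropR_toR; exact: G_line.
Qed.

Lemma entryB (R : realType) a b (A B : 'M[R]_(a, b)) i j : (A - B) i j = A i j - B i j.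
Proof. by rewrite !mxE. Qed.

Section Coords.
Variables (R : realType) (k m : nat) (v : 'I_m -> 'rV[int]_k.+1).
Variables (sig : 'I_k -> 'I_m) (C : 'M[int]_k).
Definition Bt : 'M[int]_k := \matrix_(i, j) vtil (v (sig i)) 0 j.
Definition Vt : 'M[int]_(k, k.+1) := \matrix_(i, j) v (sig i) 0 j.
Hypothesis hC : C *m Bt = 1%:M.

Let ir := (fun z : int => z%:~R : R).
Definition BR := map_mx ir Bt.
Definition CR := map_mx ir C.
Definition VR := map_mx ir Vt.

Definition chat (y : 'rV[R]_k) : 'rV[R]_k := y *m CR.
Definition cn (t : 'rV[R]_k.+1) : R := t 0 ord_max - (chat (dropR t) *m VR) 0 ord_max.
Definition Lf (y : 'rV[R]_k) (s : R) : 'rV[R]_k.+1 := chat y *m VR + s *: elast R k.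

Lemma BC : Bt *m C = 1%:M. Proof. exact: mulmx1C. Qed.
Lemma CRBR : CR *m BR = 1%:M. Proof. by rewrite /CR /BR -map_mxM hC map_mx1. Qed.
Lemma BRCR : BR *m CR = 1%:M. Proof. by rewrite /CR /BR -map_mxM BC map_mx1. Qed.

Lemma dropR_VR (x : 'rV[R]_k) : dropR (x *m VR) = x *m BR.
Proof. by apply/matrixP => i j; rewrite ord1 !mxE; apply: eq_bigr => l _; rewrite !mxE. Qed.

Lemma drop_Lf y s : dropR (Lf y s) = y.
Proof. by rewrite /Lf dropRD dropRZ dropR_elast scaler0 addr0 dropR_VR /chat -mulmxA CRBR mulmx1. Qed.

Lemma elast_max : elast R k 0 ord_max = 1. Proof. by rewrite mxE eqxx. Qed.

Lemma Lf_max y s : Lf y s 0 ord_max = (chat y *m VR) 0 ord_max + s.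
Proof. by rewrite /Lf [LHS]mxE [X in _ + X]mxE elast_max mulr1. Qed.

Lemma cn_Lf y s : cn (Lf y s) = s.
Proof. by rewrite /cn drop_Lf Lf_max addrAC subrr add0r. Qed.
Lemma Lf_decomp t : t = Lf (dropR t) (cn t).
Proof.
apply/matrixP => i j; rewrite ord1 {i}.
case: (ltnP j k) => hj.
  have -> : j = widen_ord (leqnSn k) (Ordinal hj) by apply: val_inj.
  have e := congr1 (fun M : 'rV[R]_k => M 0 (Ordinal hj)) (drop_Lf (dropR t) (cn t)).
  move: e => /=; rewrite [X in X = _ -> _]mxE [X in _ = X -> _]mxE.
  by move=> ->.
have -> : j = ord_max by apply: val_inj => /=; have := ltn_ord j; lia.
by rewrite Lf_max /cn addrC subrK.
Qed.
Lemma chatD a b : chat (a + b) = chat a + chat b. Proof. by rewrite /chat mulmxDl. Qed.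
Lemma chatZ s a : chat (s *: a) = s *: chat a. Proof. by rewrite /chat scalemxAl. Qed.
Lemma chatB a b : chat (a - b) = chat a - chat b. Proof. by rewrite /chat mulmxBl. Qed.

Lemma cnB a b : cn (a - b) = cn a - cn b.
Proof.
rewrite /cn dropRB chatB mulmxBl.
set X := chat (dropR a) *m VR; set Y := chat (dropR b) *m VR.
rewrite !mxE; lra.
Qed.
Lemma cnZ s a : cn (s *: a) = s * cn a.
Proof.
rewrite /cn dropRZ chatZ -scalemxAl.
set X := chat (dropR a) *m VR.
rewrite !mxE; lra.
Qed.
Lemma LfB y1 s1 y2 s2 : Lf y1 s1 - Lf y2 s2 = Lf (y1 - y2) (s1 - s2).
Proof. by rewrite /Lf chatB mulmxBl scalerBl; set X := elast R k; set A := chat y1 *m VR; set B := chat y2 *m VR; rewrite opprD addrACA. Qed.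

Lemma chat_toR w : chat (toR R w) = toR R (w *m C).
Proof. by rewrite /chat /toR /CR map_mxM. Qed.

Lemma cn_toR z : Zset1 R (cn (toR R z)).
Proof.
rewrite /cn dropR_toR chat_toR /VR /toR -map_mxM.
exists (z 0 ord_max - ((vtil z *m C) *m Vt) 0 ord_max).
by rewrite intrB !mxE.
Qed.

Lemma chat_drop_toR z i : Zset1 R (chat (dropR (toR R z)) 0 i).
Proof. by rewrite dropR_toR chat_toR mxE; eexists. Qed.

Lemma drop_v i0 : dropR (toR R (v (sig i0))) = row i0 BR.
Proof. by apply/matrixP => i j; rewrite !mxE. Qed.

Lemma chat_v i0 : chat (dropR (toR R (v (sig i0)))) = row i0 1%:M.
Proof. by rewrite drop_v /chat -row_mul BRCR. Qed.

Lemma cn_v i0 : cn (toR R (v (sig i0))) = 0.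
Proof.
by rewrite /cn chat_v -row_mul mul1mx /VR !mxE subrr.
Qed.
Lemma chat_cont i : continuous (fun y : 'rV[R]_k => chat y 0 i).
Proof.
rewrite /chat; under eq_fun do rewrite mxE.
apply: sum_cont => l y; apply: continuousM; [exact: coord_cont|exact: cst_continuous].
Qed.
Lemma chatdrop_cont i : continuous (fun t : 'rV[R]_k.+1 => chat (dropR t) 0 i).
Proof.
move=> t; have := continuous_comp (@dropR_cont R k t) (@chat_cont i (dropR t)).
by [].
Qed.
Lemma cn_cont : continuous cn.
Proof.
have h : continuous (fun t : 'rV[R]_k.+1 => (chat (dropR t) *m VR) 0 ord_max).
  have -> : (fun t : 'rV[R]_k.+1 => (chat (dropR t) *m VR) 0 ord_max) =
      (fun t => \sum_l chat (dropR t) 0 l * VR l ord_max).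
    by apply/funext => t; rewrite mxE.
  apply: sum_cont => l y; apply: continuousM; [exact: chatdrop_cont|exact: cst_continuous].
rewrite /cn => t; apply: continuousB; [exact: coord_cont|exact: h].
Qed.

Definition Hset (J : set 'I_m) (t : 'rV[R]_k.+1) :=
  (forall i, ~ J (sig i) -> Zset1 R (chat (dropR t) 0 i)) /\ Zset1 R (cn t).
Definition Htset (J : set 'I_m) (y : 'rV[R]_k) :=
  forall i, ~ J (sig i) -> Zset1 R (chat y 0 i).

Lemma G_Hset J : (forall j, J j -> exists i, sig i = j) ->
  gen_closed_subgroup R v J `<=` Hset J.
Proof.
move=> Jsig; apply: G_sub.
- have -> : Hset J = (\bigcap_(i in [set i | ~ J (sig i)])
      ((fun t => chat (dropR t) 0 i) @^-1` Zset1 R)) `&` (cn @^-1` Zset1 R).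
    by apply/seteqP; split => t [h1 h2]; split.
  apply: closedI.
    apply: closed_bigI => i _; apply: closed_comp; last exact: closed_Zset1.
    by move=> t _; exact: chatdrop_cont.
  by apply: closed_comp; [move=> t _; exact: cn_cont|exact: closed_Zset1].
- split.
    by rewrite -(toR0 R k.+1); split; [move=> i _; exact: chat_drop_toR|exact: cn_toR].
  move=> a b [ha1 ha2] [hb1 hb2]; split; last by rewrite cnB; exact: Zset1B.
  by move=> i hi; rewrite dropRB chatB entryB; apply: Zset1B; [exact: ha1|exact: hb1].
- by move=> z; split; [move=> i _; exact: chat_drop_toR|exact: cn_toR].
- move=> j t Jj; have [i0 e] := Jsig j Jj; subst j; split; last first.
    by rewrite cnZ cn_v mulr0; exact: Zset10.
  move=> i hi; rewrite dropRZ chatZ chat_v !mxE.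
  have -> : (i0 == i) = false by apply/eqP => e; subst i; exact: hi.
  by rewrite mulr0; exact: Zset10.
Qed.

Lemma vtil_row i0 : toR R (vtil (v (sig i0))) = row i0 BR.
Proof. by apply/matrixP => i j; rewrite !mxE. Qed.

Lemma G_Htset J : (forall j, J j -> exists i, sig i = j) ->
  gen_closed_subgroup R (fun i => vtil (v i)) J `<=` Htset J.
Proof.
move=> Jsig; apply: G_sub.
- have -> : Htset J = \bigcap_(i in [set i | ~ J (sig i)])
      ((fun y => chat y 0 i) @^-1` Zset1 R).
    by apply/seteqP; split => y h.
  apply: closed_bigI => i _; apply: closed_comp; last exact: closed_Zset1.
  by move=> t _; exact: chat_cont.
- split.
    by rewrite -(toR0 R k) => i _; rewrite chat_toR mxE; eexists.
  by move=> a b ha hb i hi; rewrite chatB entryB; apply: Zset1B; [exact: ha|exact: hb].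
- by move=> z i _; rewrite chat_toR mxE; eexists.
- move=> j t Jj; have [i0 e] := Jsig j Jj; subst j.
  move=> i hi; rewrite chatZ vtil_row /chat -row_mul BRCR !mxE.
  have -> : (i0 == i) = false by apply/eqP => e; subst i; exact: hi.
  by rewrite mulr0; exact: Zset10.
Qed.

Lemma row_VR i : row i VR = toR R (v (sig i)).
Proof. by apply/matrixP => a b; rewrite ord1 !mxE. Qed.

Lemma Lf_in_G J y s : Htset J y -> Zset1 R s -> gen_closed_subgroup R v J (Lf y s).
Proof.
move=> hy [z ->]; rewrite /Lf; apply: G_D.
  rewrite mulmx_sum_row; apply: (big_ind (gen_closed_subgroup R v J)).
  - exact: G_0.
  - by move=> a b; apply: G_D.
  move=> i _; rewrite row_VR.
  have [Ji|nJi] := pselect (J (sig i)); first exact: G_line.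
  have [w ->] := hy i nJi; rewrite -toRZ; exact: G_Z.
by rewrite elast_toR -toRZ; exact: G_Z.
Qed.
End Coords.

Lemma big_cast k (n0 n1 : nat) (e : n0 = n1) (F : 'I_n0 -> 'rV[int]_k) :
  \sum_(l < n0) F l = \sum_(l < n1) F (cast_ord (esym e) l).
Proof. by subst n1; apply: eq_bigr => l _; congr F; apply: val_inj. Qed.

Lemma sig_exists k m (v : 'I_m -> 'rV[int]_k.+1) (S : {set 'I_m}) :
  #|S| = k -> Zspan (fun i => vtil (v i)) S = setT ->
  exists (sig : 'I_k -> 'I_m) (C : 'M[int]_k),
    (forall j, j \in S -> exists i, sig i = j) /\ C *m Bt v sig = 1%:M.
Proof.
move=> hS hspan.
pose sig (i : 'I_k) : 'I_m := enum_val (cast_ord (esym hS) i).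
have hc : forall j : 'I_k, exists c : 'I_m -> int,
    row j (1%:M : 'M[int]_k) = \sum_(i in S) c i *: vtil (v i).
  by move=> j; have : Zspan (fun i => vtil (v i)) S (row j 1%:M) by rewrite hspan.
have [c hc'] := choice hc.
exists sig, (\matrix_(j, l) c j (sig l)); split.
  move=> j jS; exists (cast_ord hS (enum_rank_in jS j)).
  rewrite /sig; have -> : cast_ord (esym hS) (cast_ord hS (enum_rank_in jS j)) = enum_rank_in jS j.
    by apply: val_inj.
  exact: enum_rankK_in.
apply/row_matrixP => j; rewrite row_mul mulmx_sum_row hc' [RHS]big_enum_val (big_cast hS).
apply: eq_bigr => l _; rewrite mxE; congr (_ *: _).
  by rewrite mxE.
by apply/matrixP => a b; rewrite ord1 !mxE.
Qed.

Lemma Zrel_refl (R : realType) n (u : 'rV[R]_n) : Zrel u u.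
Proof. by exists 0; rewrite subrr toR0. Qed.

Lemma crepr_tq (R : realType) n (u : 'rV[R]_n) :
  exists z, crepr (cls (@Zrel R n) u) = u + toR R z.
Proof.
have [z hz] := crepr_cls (@Zrel_refl R n) u; exists z; by rewrite -hz addrC subrK.
Qed.

Lemma Zrel1_refl (R : realType) (u : R) : Zrel1 u u.
Proof. by exists 0; rewrite subrr. Qed.

Lemma crepr_c1 (R : realType) (u : R) : exists z : int, crepr (cls (@Zrel1 R) u) = u + z%:~R.
Proof.
have [z hz] := crepr_cls (@Zrel1_refl R) u; exists z; by rewrite -hz addrC subrK.
Qed.

Lemma c1_eq (R : realType) (a b : R) : Zset1 R (b - a) -> cls (@Zrel1 R) a = cls (@Zrel1 R) b.
Proof.
move=> [z h]; apply: cls_eq; last by exists z.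
- by move=> x y [w e]; exists (- w); rewrite intrN -e opprB.
- by move=> x y t [w1 e1] [w2 e2]; exists (w1 + w2); rewrite intrD -e1 -e2; lra.
Qed.

Lemma cadd_cls (R : realType) (a b : R) :
  cadd (cls (@Zrel1 R) a) (cls (@Zrel1 R) b) = cls (@Zrel1 R) (a + b).
Proof.
rewrite /cadd; have [z1 ->] := crepr_c1 a; have [z2 ->] := crepr_c1 b.
apply: c1_eq; exists (- z1 - z2); rewrite intrB intrN; lra.
Qed.

Section FamRel.
Variables (R : realType) (n : nat) (P : Type) (Gf : P -> set 'rV[R]_n).
Hypotheses (Gf0 : forall p, Gf p 0)
  (GfB : forall p a b, Gf p a -> Gf p b -> Gf p (a - b))
  (GfZ : forall p z, Gf p (toR R z)).

Definition frel (x y : (torus R n * P)%type) :=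
  x.2 = y.2 /\ Gf x.2 (crepr y.1 - crepr x.1).

Let GfN p a : Gf p a -> Gf p (- a).
Proof. by move=> h; rewrite -sub0r; apply: GfB. Qed.
Let GfD p a b : Gf p a -> Gf p b -> Gf p (a + b).
Proof. by move=> ha hb; rewrite -[b]opprK; apply: GfB => //; apply: GfN. Qed.

Lemma frel_refl x : frel x x. Proof. by split => //; rewrite subrr. Qed.
Lemma frel_sym x y : frel x y -> frel y x.
Proof. by case=> e h; split => //; rewrite -e -opprB; apply: GfN. Qed.
Lemma frel_trans x y z : frel x y -> frel y z -> frel x z.
Proof.
case=> e1 h1 [e2 h2]; split; first by rewrite e1.
have -> : crepr z.1 - crepr x.1 = (crepr z.1 - crepr y.1) + (crepr y.1 - crepr x.1).
  by rewrite addrA subrK.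
by apply: GfD => //; rewrite e1.
Qed.

Local Notation tq := (cls (@Zrel R n)).

Lemma frel_tq a b p : Gf p (b - a) -> cls frel (tq a, p) = cls frel (tq b, p).
Proof.
move=> h; apply: cls_eq; [exact: frel_sym|exact: frel_trans|split => //=].
have [z1 ->] := crepr_tq a; have [z2 ->] := crepr_tq b.
have -> : b + toR R z2 - (a + toR R z1) = (b - a) + toR R (z2 - z1).
  by rewrite toRB; set B := toR R z2; set A := toR R z1; rewrite opprD addrACA.
by apply: GfD.
Qed.

Lemma crepr_frel a p : let y := crepr (cls frel (tq a, p)) in y.2 = p /\ Gf p (crepr y.1 - a).
Proof.
move=> y; have [/= e h] := crepr_cls frel_refl (tq a, p).
split; first by rewrite -e.
have [z hz] := crepr_tq a; move: h; rewrite hz.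
have -> : crepr y.1 - a = crepr y.1 - (a + toR R z) + toR R z.
  by rewrite opprD addrA subrK.
by move=> h; apply: GfD.
Qed.

Lemma frel_crepr x : x = cls frel (tq (crepr (crepr x).1), (crepr x).2).
Proof. by rewrite cls_crepr -[in LHS](cls_crepr x); case: (crepr x). Qed.
End FamRel.

Section Main.
Variables (R : realType) (k m : nat) (v : 'I_m -> 'rV[int]_k.+1).

Definition Ip (p : PT R v) : set 'I_m := [set i | facetP R v i (set_val p)].
Definition GpF (p : PT R v) := gen_closed_subgroup R v (Ip p).
Definition GtF (p : PT R v) := gen_closed_subgroup R (fun i => vtil (v i)) (Ip p).

Definition qM (w : ('rV[R]_k.+1 * PT R v)%type) : Mspace R v :=
  cls (Delta R v) (cls (@Zrel R k.+1) w.1, w.2).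
Definition qN (w : ('rV[R]_k * PT R v)%type) : Nspace R v :=
  cls (Deltatil R v) (cls (@Zrel R k) w.1, w.2).

Lemma M_crepr x : x = qM (crepr (crepr x).1, (crepr x).2).
Proof. exact: (@frel_crepr R k.+1 (PT R v) GpF). Qed.
Lemma N_crepr x : x = qN (crepr (crepr x).1, (crepr x).2).
Proof. exact: (@frel_crepr R k (PT R v) GtF). Qed.

Lemma M_eq u u' p : GpF p (u' - u) -> qM (u, p) = qM (u', p).
Proof.
apply: (@frel_tq R k.+1 (PT R v) GpF) => [q|q a b|q z].
- exact: G_0. - exact: G_B. - exact: G_Z.
Qed.
Lemma N_eq u u' p : GtF p (u' - u) -> qN (u, p) = qN (u', p).
Proof.
apply: (@frel_tq R k (PT R v) GtF) => [q|q a b|q z].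
- exact: G_0. - exact: G_B. - exact: G_Z.
Qed.

Lemma M_rep u p : (crepr (qM (u, p))).2 = p /\ GpF p (crepr (crepr (qM (u, p))).1 - u).
Proof.
apply: (@crepr_frel R k.+1 (PT R v) GpF) => [q|q a b|q z].
- exact: G_0. - exact: G_B. - exact: G_Z.
Qed.
Lemma N_rep u p : (crepr (qN (u, p))).2 = p /\ GtF p (crepr (crepr (qN (u, p))).1 - u).
Proof.
apply: (@crepr_frel R k (PT R v) GtF) => [q|q a b|q z].
- exact: G_0. - exact: G_B. - exact: G_Z.
Qed.

Local Notation c1 := (cls (@Zrel1 R)).
Local Notation E := (elast R k).

Lemma GpF_N p a : GpF p a -> GpF p (- a).
Proof. exact: G_N. Qed.
Lemma GpF_B p a b : GpF p a -> GpF p b -> GpF p (a - b).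
Proof. exact: G_B. Qed.
Lemma GpF_D p a b : GpF p a -> GpF p b -> GpF p (a + b).
Proof. exact: G_D. Qed.
Lemma GpF_E p (z : int) : GpF p (z%:~R *: E).
Proof. by rewrite elast_toR -toRZ; exact: G_Z. Qed.

Lemma act_qM (s : R) u p : circle_act (c1 s) (qM (u, p)) = qM (u + s *: E, p).
Proof.
have [e2 h] := M_rep u p.
change (qM (crepr (crepr (qM (u, p))).1 + crepr (c1 s) *: E, (crepr (qM (u, p))).2)
   = qM (u + s *: E, p)).
rewrite e2; apply: M_eq.
have [z ->] := crepr_c1 s.
set A := crepr (crepr (qM (u, p))).1 in h *.
have -> : u + s *: E - (A + (s + z%:~R) *: E) = - (A - u) - z%:~R *: E.
  by apply/matrixP => i j; rewrite !mxE; ring.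
by apply: GpF_B; [apply: GpF_N|apply: GpF_E].
Qed.

Lemma dproj_qM u p : dproj (qM (u, p)) = qN (dropR u, p).
Proof.
have [e2 h] := M_rep u p.
change (qN (dropR (crepr (crepr (qM (u, p))).1), (crepr (qM (u, p))).2) = qN (dropR u, p)).
rewrite e2; apply: N_eq; rewrite -dropRB; apply: (@drop_G R k m v (Ip p)).
by rewrite -opprB; apply: GpF_N.
Qed.
Lemma qM_quot : quot_map qM.
Proof.
have q1 : quot_map (fun w : ('rV[R]_k.+1 * PT R v)%type => (cls (@Zrel R k.+1) w.1, w.2)).
  apply: quot_open_surj; first exact: open_mapX (@torus_open R k.+1) (@open_map_id _).
  by move=> [a p]; exists (crepr a, p); rewrite /= cls_crepr.
exact: (quot_comp q1 (@quot_cls _ (Delta R v))).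
Qed.
Lemma qN_quot : quot_map qN.
Proof.
have q1 : quot_map (fun w : ('rV[R]_k * PT R v)%type => (cls (@Zrel R k) w.1, w.2)).
  apply: quot_open_surj; first exact: open_mapX (@torus_open R k) (@open_map_id _).
  by move=> [a p]; exists (crepr a, p); rewrite /= cls_crepr.
exact: (quot_comp q1 (@quot_cls _ (Deltatil R v))).
Qed.

Lemma comp_cont (X Y Z : topologicalType) (f : X -> Y) (g : Y -> Z) :
  continuous f -> continuous g -> continuous (fun x => g (f x)).
Proof. by move=> cf cg x; apply: continuous_comp; [exact: cf|exact: cg]. Qed.

Lemma qM_cont : continuous qM.
Proof.
apply: (@comp_cont _ _ _ (fun w : ('rV[R]_k.+1 * PT R v)%type => (cls (@Zrel R k.+1) w.1, w.2))
  (cls (Delta R v))); last exact: cls_continuous.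
apply: pair_continuous; last exact: snd_continuous.
apply: (comp_cont (@fst_continuous _ _)); exact: cls_continuous.
Qed.
Lemma qN_cont : continuous qN.
Proof.
apply: (@comp_cont _ _ _ (fun w : ('rV[R]_k * PT R v)%type => (cls (@Zrel R k) w.1, w.2))
  (cls (Deltatil R v))); last exact: cls_continuous.
apply: pair_continuous; last exact: snd_continuous.
apply: (comp_cont (@fst_continuous _ _)); exact: cls_continuous.
Qed.

Lemma act_cont : continuous (fun gx : (circle R * Mspace R v)%type => circle_act gx.1 gx.2).
Proof.
pose h := fun z : (R * ('rV[R]_k.+1 * PT R v))%type => (c1 z.1, qM z.2).
have qh : quot_map h.
  have q1 : quot_map (fun z : (R * ('rV[R]_k.+1 * PT R v))%type =>
      (z.1, (cls (@Zrel R k.+1) z.2.1, z.2.2))).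
    apply: quot_open_surj.
      exact: open_mapX (@open_map_id _) (open_mapX (@torus_open R k.+1) (@open_map_id _)).
    by move=> [s [a p]]; exists (s, (crepr a, p)); rewrite /= cls_crepr.
  have q2 := @quot_whitehead R _ _ _ (@quot_cls _ (Delta R v)) (@cls_surj _ (Delta R v)).
  have q3 : quot_map (fun z : (R * Mspace R v)%type => (c1 z.1, z.2)).
    apply: quot_open_surj; first exact: open_mapX (@circle_open R) (@open_map_id _).
    by move=> [g x]; exists (crepr g, x); rewrite /= cls_crepr.
  exact: (quot_comp (quot_comp q1 q2) q3).
apply: (@quot_cont _ _ _ h (fun gx : (circle R * Mspace R v)%type => circle_act gx.1 gx.2)
   (fun z => qM (z.2.1 + z.1 *: E, z.2.2)) qh); last first.
  by move=> [s [u p]]; rewrite /h /= act_qM.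
apply: (comp_cont _ qM_cont); apply: pair_continuous; last first.
  exact: (comp_cont (@snd_continuous _ _) (@snd_continuous _ _)).
move=> z; apply: (@continuousD _ _ _ (fun z : (R * ('rV[R]_k.+1 * PT R v))%type => z.2.1)
   (fun z => z.1 *: E)).
  exact: (comp_cont (@snd_continuous _ _) (@fst_continuous _ _)).
by apply: continuousZr_tmp; exact: fst_continuous.
Qed.
Lemma M_ex x : exists w, x = qM w.
Proof. by exists (crepr (crepr x).1, (crepr x).2); exact: M_crepr. Qed.
Lemma N_ex b : exists w, b = qN w.
Proof. by exists (crepr (crepr b).1, (crepr b).2); exact: N_crepr. Qed.
Lemma c1_ex (g : circle R) : exists a, g = c1 a.
Proof. by exists (crepr g); rewrite cls_crepr. Qed.

Lemma dproj_cont : continuous (@dproj R k m v).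
Proof.
apply: (@quot_cont _ _ _ qM (@dproj R k m v) (fun w => qN (dropR w.1, w.2)) qM_quot).
  apply: (comp_cont _ qN_cont); apply: pair_continuous; last exact: snd_continuous.
  exact: (comp_cont (@fst_continuous _ _) (@dropR_cont R k)).
by move=> [u p]; rewrite dproj_qM.
Qed.

Lemma act0 (x : Mspace R v) : circle_act (czero R) x = x.
Proof.
have [[u p] ->] := M_ex x.
by rewrite /czero act_qM scale0r addr0.
Qed.

Lemma act_add g h (x : Mspace R v) : circle_act (cadd g h) x = circle_act g (circle_act h x).
Proof.
have [[u p] ->] := M_ex x; have [a ->] := c1_ex g; have [b ->] := c1_ex h.
rewrite cadd_cls !act_qM; congr qM; congr pair.
by apply/matrixP => i j; rewrite !mxE; ring.
Qed.

Lemma dproj_act g (x : Mspace R v) : dproj (circle_act g x) = dproj x.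
Proof.
have [[u p] ->] := M_ex x; have [a ->] := c1_ex g.
by rewrite act_qM !dproj_qM dropRD dropRZ dropR_elast scaler0 addr0.
Qed.
End Main.

Lemma set_val_cont (X : topologicalType) (A : set X) : continuous (@set_val X A).
Proof. exact: initial_continuous. Qed.

Lemma nbhs_neq (R : realType) (a c : R) : a != c -> nbhs a [set x | x != c].
Proof.
move=> ac; apply/nbhs_ballP; exists `|a - c|; first by rewrite /= normr_gt0 subr_eq0.
move=> x /=; rewrite /ball /=; apply: contraTneq => ->; by rewrite ltxx.
Qed.

Lemma open_O (R : realType) k m (v : 'I_m -> 'rV[int]_k.+1) (S : {set 'I_m}) :
  open [set p : PT R v | forall j, facetP R v j (set_val p) -> j \in S].
Proof.
rewrite openE => p Op.
have : \forall p' \near p, forall j, facetP R v j (set_val p') -> j \in S.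
  apply: (@filter_forall _ _ (fun j (p' : PT R v) => facetP R v j (set_val p') -> j \in S) (nbhs p) _) => j.
  have [jS|njS] := boolP (j \in S); first by apply: nearW.
  have nf : ~ facetP R v j (set_val p) by move/Op; rewrite (negbTE njS).
  pose f := fun p' : PT R v => ipR (set_val p') (toR R (vtil (v j))).
  have cf : continuous f.
    by move=> x; apply: (continuous_comp (@set_val_cont _ _ x) (@ipR_cont R k _ _)).
  have fne : f p != - ((v j 0 ord_max)%:~R).
    by apply/eqP => e; apply: nf; split => //; exact: set_valP.
  apply: (@filterS _ _ _ (f @^-1` [set x | x != - ((v j 0 ord_max)%:~R)]) _ _ (cf p _ (nbhs_neq fne))) => p' /= h [_ e].
  by move: h; rewrite /f e eqxx.
exact.
Qed.

Lemma Lf_cont (R : realType) k m (v : 'I_m -> 'rV[int]_k.+1) sig (C : 'M[int]_k) :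
  continuous (fun z : ('rV[R]_k * R)%type => Lf v sig C z.1 z.2).
Proof.
have c1 : continuous (fun y : 'rV[R]_k => chat C y *m VR R v sig).
  apply: mx_cont => i j; rewrite [i]ord1.
  have -> : (fun y : 'rV[R]_k => (chat C y *m VR R v sig) 0 j) =
      (fun y => \sum_l chat C y 0 l * VR R v sig l j).
    by apply/funext => y; rewrite mxE.
  apply: sum_cont => l y; apply: continuousM; [exact: chat_cont|exact: cst_continuous].
move=> z; rewrite /Lf.
apply: (@continuousD _ _ _ (fun z : ('rV[R]_k * R)%type => chat C z.1 *m VR R v sig)
   (fun z => z.2 *: elast R k)).
  exact: (comp_cont (@fst_continuous _ _) c1).
by apply: continuousZr_tmp; exact: snd_continuous.
Qed.

Section Triv.
Variables (R : realType) (k m : nat) (v : 'I_m -> 'rV[int]_k.+1).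
Local Notation c1 := (cls (@Zrel1 R)).
Local Notation E := (elast R k).
Local Notation qM := (@qM R k m v).
Local Notation qN := (@qN R k m v).
Variables (sig : 'I_k -> 'I_m) (C : 'M[int]_k) (S : {set 'I_m}).
Hypothesis hC : C *m Bt v sig = 1%:M.
Hypothesis hsig : forall j, j \in S -> exists i, sig i = j.

Let O := [set p : PT R v | forall j, facetP R v j (set_val p) -> j \in S].
Let U := [set b : Nspace R v | O (crepr b).2].

Let Jsig p : O p -> forall j, Ip p j -> exists i, sig i = j.
Proof. by move=> Op j /Op /hsig. Qed.

Let U_qN y p : U (qN (y, p)) <-> O p.
Proof. by rewrite /U /=; have [-> _] := N_rep y p. Qed.

Definition phiT (x : Mspace R v) : (Nspace R v * circle R)%type :=
  (dproj x, c1 (cn v sig C (crepr (crepr x).1))).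
Definition psiT (z : (Nspace R v * circle R)%type) : Mspace R v :=
  qM (Lf v sig C (crepr (crepr z.1).1) (crepr z.2), (crepr z.1).2).

Let Q1 u p : O p -> phiT (qM (u, p)) = (qN (dropR u, p), c1 (cn v sig C u)).
Proof.
move=> Op; rewrite /phiT dproj_qM; congr pair.
have [_ h] := M_rep u p.
have [_ h2] := G_Hset hC (Jsig Op) h.
symmetry; apply: c1_eq; by rewrite -cnB.
Qed.

Let Q2 y p s : O p -> psiT (qN (y, p), c1 s) = qM (Lf v sig C y s, p).
Proof.
move=> Op; rewrite /psiT /=.
have [e2 h] := N_rep y p; rewrite e2.
have [z ->] := crepr_c1 s.
apply: M_eq; rewrite LfB; apply: Lf_in_G.
  apply: (G_Htset hC (Jsig Op)); rewrite -opprB; exact: G_N.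
by exists (- z); rewrite intrN opprD addrA subrr add0r.
Qed.

Lemma open_U : open U.
Proof.
apply: qN_quot.
have -> : qN @^-1` U = (@snd _ _) @^-1` O.
  by apply/seteqP; split => -[y p] /=; rewrite U_qN.
by apply: (continuousP _).1; [exact: snd_continuous|exact: open_O].
Qed.

Lemma triv_props :
  {within (@dproj R k m v) @^-1` U, continuous phiT} /\
  {within U `*` setT, continuous psiT} /\
  (forall x, U (dproj x) ->
     (phiT x).1 = @dproj R k m v x /\ psiT (phiT x) = x /\
     forall g, phiT (circle_act g x) = ((phiT x).1, cadd g (phiT x).2)) /\
  (forall z, U z.1 -> dproj (psiT z) = z.1 /\ phiT (psiT z) = z).
Proof.
split.
  apply: (@quot_cont_in _ _ _ qM phiT _ (fun w => (qN (dropR w.1, w.2), c1 (cn v sig C w.1)))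
    (@qM_quot R k m v) (@qM_cont R k m v)).
  - by apply: (continuousP _).1; [exact: dproj_cont|exact: open_U].
  - apply: pair_continuous.
      apply: (comp_cont _ (@qN_cont R k m v)); apply: pair_continuous; last exact: snd_continuous.
      exact: (comp_cont (@fst_continuous _ _) (@dropR_cont R k)).
    exact: (comp_cont (@fst_continuous _ _)
      (comp_cont (@cn_cont R k m v sig C) (@cls_continuous _ (@Zrel1 R)))).
  - by move=> [u p]; rewrite /= dproj_qM U_qN => Op; rewrite Q1.
split.
  pose h := fun w : (('rV[R]_k * PT R v) * R)%type => (qN w.1, c1 w.2).
  have qh : quot_map h.
    have q1 : quot_map (fun w : (('rV[R]_k * PT R v) * R)%type =>
        ((cls (@Zrel R k) w.1.1, w.1.2), w.2)).
      apply: quot_open_surj.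
        exact: open_mapX (open_mapX (@torus_open R k) (@open_map_id _)) (@open_map_id _).
      by move=> [[a p] s]; exists ((crepr a, p), s); rewrite /= cls_crepr.
    have q2 := @quot_whitehead_r R _ _ _ (@quot_cls _ (Deltatil R v)) (@cls_surj _ (Deltatil R v)).
    have q3 : quot_map (fun z : (Nspace R v * R)%type => (z.1, c1 z.2)).
      apply: quot_open_surj; first exact: open_mapX (@open_map_id _) (@circle_open R).
      by move=> [b g]; exists (b, crepr g); rewrite /= cls_crepr.
    exact: (quot_comp (quot_comp q1 q2) q3).
  apply: (@quot_cont_in _ _ _ h psiT _ (fun w => qM (Lf v sig C w.1.1 w.2, w.1.2)) qh).
  - apply: pair_continuous.
      exact: (comp_cont (@fst_continuous _ _) (@qN_cont R k m v)).
    exact: (comp_cont (@snd_continuous _ _) (@cls_continuous _ _)).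
  - have -> : U `*` setT = (@fst _ (circle R)) @^-1` U.
      by apply/seteqP; split => -[b g] //= [].
    by apply: (continuousP _).1; [exact: fst_continuous|exact: open_U].
  - apply: (@comp_cont _ _ _ (fun w : (('rV[R]_k * PT R v) * R)%type => (Lf v sig C w.1.1 w.2, w.1.2))
       _ _ (@qM_cont R k m v)).
    apply: pair_continuous.
      apply: (@comp_cont _ _ _ (fun w : (('rV[R]_k * PT R v) * R)%type => (w.1.1, w.2))
        (fun z : ('rV[R]_k * R)%type => Lf v sig C z.1 z.2) _ (@Lf_cont R k m v sig C)).
      apply: pair_continuous; last exact: snd_continuous.
      exact: (comp_cont (@fst_continuous _ _) (@fst_continuous _ _)).
    exact: (comp_cont (@fst_continuous _ _) (@snd_continuous _ _)).
  - by move=> [[y p] s] [/= Uy _]; rewrite Q2 //; exact: (U_qN y p).1.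
split.
  move=> x; have [[u p] ->] := M_ex x; rewrite dproj_qM => /(U_qN _ _).1 Op.
  split; first by rewrite Q1.
  split; first by rewrite Q1 // Q2 // -(Lf_decomp hC).
  move=> g; have [a ->] := c1_ex g.
  rewrite act_qM !Q1 //= cadd_cls dropRD dropRZ dropR_elast scaler0 addr0; congr (_, _).
  apply: c1_eq; exists 0.
  have -> : u + a *: E = u - (- a) *: E by rewrite scaleNr opprK.
  rewrite cnB cnZ.
  have -> : cn v sig C E = 1.
    have -> : E = Lf v sig C 0 1.
      by rewrite /Lf /chat mul0mx mul0mx add0r scale1r.
    exact: (cn_Lf hC).
  rewrite mulr1 /=; lra.
move=> [b g] /= Ub; have [[y p] eb] := N_ex b; have [s eg] := c1_ex g.
rewrite eb eg in Ub *; have Op := (U_qN y p).1 Ub.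
rewrite Q2 // dproj_qM (drop_Lf hC); split => //.
by rewrite Q1 // (drop_Lf hC) (cn_Lf hC).
Qed.
End Triv.

Unset Implicit Arguments.
Theorem proposition5p5 (R : realType) (k m : nat) (v : 'I_m -> 'rV[int]_k.+1) :
  (2 <= k)%N ->
  good_cone R v ->
  strictly_convex (cone R v) ->
  (forall x : 'rV[R]_k.+1, cone R v x -> x != 0 -> 0 < x 0 ord_max) ->
  smoothness_criterion R v ->
  principal_bundle (@cadd R) (@czero R) (@circle_act R k m v) (@dproj R k m v).
Proof.
move=> _ _ _ _ [hdel _].
have loc : forall b : Nspace R v, exists U : set (Nspace R v), open U /\ U b /\
    exists (phi : Mspace R v -> (Nspace R v * circle R)%type)
           (psi : (Nspace R v * circle R)%type -> Mspace R v),
      {within (@dproj R k m v) @^-1` U, continuous phi} /\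
      {within U `*` setT, continuous psi} /\
      (forall x, U (dproj x) ->
         (phi x).1 = dproj x /\ psi (phi x) = x /\
         forall g, phi (circle_act g x) = ((phi x).1, cadd g (phi x).2)) /\
      (forall z, U z.1 -> dproj (psi z) = z.1 /\ phi (psi z) = z).
  move=> b; have [[y0 p0] eb] := N_ex b.
  case: hdel => [[B hB] [_ hvert]].
  have [q [vq hfac]] := exists_vertex hB (set_valP p0).
  have [hcard [_ hspan]] := hvert q vq.
  have [sig [C [hsig hC]]] := sig_exists hcard hspan.
  exists [set b : Nspace R v | forall j, facetP R v j (set_val (crepr b).2) ->
            j \in [set i : 'I_m | `[< facetP R v i q >]]%SET].
  split; first exact: (@open_U R k m v).
  split.
    rewrite eb /=; have [-> _] := N_rep y0 p0.
    by move=> j /hfac hj; rewrite inE; apply/asboolP.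
  exists (@phiT R k m v sig C), (@psiT R k m v sig C).
  exact: (@triv_props R k m v sig C _ hC hsig).
split; first exact: act_cont.
split; first exact: act0.
split; first exact: act_add.
split; first exact: dproj_cont.
split.
  move=> b; have [U [_ [Ub [phi [psi [_ [_ [_ h]]]]]]]] := loc b.
  by exists (psi (b, czero R)); exact: (h (b, czero R) Ub).1.
split; first exact: dproj_act.
exact: loc.
Qed.
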